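(* Let $p$ be an odd prime, $s\ge1$, and $r\ge3$ an integer dividing $\frac{p^s+1}2$ or $\frac{p^s-1}2$. Let $\lambda=e^{2\pi i/(2r)}$, define $\Delta_0=1$, $\Delta_1=-\lambda-\lambda^{-1}$, $\Delta_{i+1}=\Delta_1\Delta_i-\Delta_{i-1}$ for $i\ge1$, and $\eta^2=-\frac{(\lambda-\lambda^{-1})^2}{2r}$. Then $\Delta_i\equiv(\Delta_i)^{p^s}\pmod p$ for all $i\ge0$, and $\eta^2\equiv(\eta^2)^{p^s}\pmod p$.
   Context: Congruences are modulo $p$ in the ring $\mathbb Z[\tfrac1{2r},\lambda]$. *)

(* Defs.v *)
From mathcomp Require Import all_boot all_order all_algebra all_field.
Set Implicit Arguments. Unset Strict Implicit. Unset Printing Implicit Defensive.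
Import Order.TTheory GRing.Theory Num.Theory.
Local Open Scope ring_scope.

(* lambda = e^{2 pi i/(2r)} = e^{i pi / r}: in algC, r.-root (-1) is the r-th
   root of -1 with minimal non-negative argument, i.e. e^{i pi/r}. *)
Definition lam (r : nat) : algC := r.-root (-1).

Fixpoint Delta (r : nat) (i : nat) : algC :=
  match i with
  | 0 => 1
  | 1 => - lam r - (lam r)^-1
  | (j.+1) as k => (- lam r - (lam r)^-1) * Delta r j -
                   (match j with 0 => 0 | j'.+1 => Delta r j' end)
  end.

Definition eta2 (r : nat) : algC := - (lam r - (lam r)^-1) ^+ 2 / (2 * r)%:R.

Definition inZlam (r : nat) (x : algC) : Prop :=
  exists (m : nat) (P : {poly int}),
    x = (map_poly (fun z : int => z%:~R) P).[lam r] / ((2 * r)%:R) ^+ m.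

(* x = y mod p in the ring Z[1/(2r), lam] *)
Definition congr_mod (r p : nat) (x y : algC) : Prop :=
  exists z : algC, inZlam r z /\ x - y = p%:R * z.

(* Main.v *)
Require Import Defs.
From mathcomp Require Import all_boot all_order all_algebra all_field.
From mathcomp Require Import ring zify.
Import Order.TTheory GRing.Theory Num.Theory.
Local Open Scope ring_scope.

Section A.
Variable r : nat.
Hypothesis hr : (0 < r)%N.
Local Notation A := (inZlam r).
Local Notation N := ((2 * r)%:R : algC).

Lemma N_neq0 : N != 0.
Proof. by rewrite pnatr_eq0 muln_eq0 /= -lt0n hr. Qed.

Lemma NX_neq0 m : N ^+ m != 0.
Proof. by rewrite expf_neq0 // N_neq0. Qed.

Lemma A_mul x y : A x -> A y -> A (x * y).
Proof.
move=> [m1 [P1 ->]] [m2 [P2 ->]]; exists (m1 + m2)%N, (P1 * P2).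
rewrite rmorphM hornerM exprD invfM; by rewrite mulrACA.
Qed.

Lemma A_add x y : A x -> A y -> A (x + y).
Proof.
move=> [m1 [P1 ->]] [m2 [P2 ->]].
exists (m1 + m2)%N, (P1 * ((2 * r) ^ m2)%N%:Z%:P + P2 * ((2 * r) ^ m1)%N%:Z%:P).
have h1 := NX_neq0 m1; have h2 := NX_neq0 m2.
move: h1 h2; set n := (2 * r)%N => h1 h2.
rewrite [map_poly _ (_ + _)]rmorphD !rmorphM /= !map_polyC hornerD !hornerM !hornerC.
rewrite /= -!pmulrn !natrX exprD.
field; by rewrite h1 h2.
Qed.

Lemma A_int (z : int) : A z%:~R.
Proof. exists 0%N, z%:P; by rewrite map_polyC hornerC expr0 divr1. Qed.

Lemma A_opp x : A x -> A (- x).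
Proof. move=> hx; rewrite -mulN1r; apply: A_mul => //; exact: (A_int (-1)). Qed.

Lemma A_nat (n : nat) : A n%:R.
Proof. rewrite pmulrn; exact: A_int. Qed.

Lemma A_lam : A (lam r).
Proof. exists 0%N, 'X; by rewrite map_polyX hornerX expr0 divr1. Qed.

Lemma A_invN : A N^-1.
Proof. exists 1%N, 1; by rewrite rmorph1 hornerC expr1 div1r. Qed.

Lemma A_exp x n : A x -> A (x ^+ n).
Proof.
move=> hx; elim: n => [|n IH]; first by rewrite expr0; exact: (A_nat 1).
rewrite exprS; exact: A_mul.
Qed.

Lemma A_sum (I : finType) (F : I -> algC) : (forall i, A (F i)) -> A (\sum_i F i).
Proof.
move=> hF; apply: (big_ind A) => //; [exact: (A_nat 0)|exact: A_add].
Qed.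

Lemma A_muln x n : A x -> A (x *+ n).
Proof. move=> hx; rewrite -mulr_natr; apply: A_mul => //; exact: A_nat. Qed.

Lemma lamr : lam r ^+ r = -1.
Proof. exact: (rootCK hr). Qed.

Lemma lam_neq0 : lam r != 0.
Proof.
apply/eqP=> h; have := lamr; rewrite h expr0n; case: r hr => //= n _ /eqP.
by rewrite eq_sym oppr_eq0 oner_eq0.
Qed.

Lemma lamV : (lam r)^-1 = - lam r ^+ r.-1.
Proof.
apply: (mulIf lam_neq0); rewrite mulVf ?lam_neq0 // mulNr -exprSr prednK //.
by rewrite lamr opprK.
Qed.

Lemma A_lamV : A (lam r)^-1.
Proof. rewrite lamV; apply: A_opp; apply: A_exp; exact: A_lam. Qed.

End A.

Section C.
Variables r p : nat.
Hypothesis hr : (0 < r)%N.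
Hypothesis hp : prime p.
Local Notation A := (inZlam r).
Local Notation cm := (congr_mod r p).

Lemma cm_refl x : cm x x.
Proof. exists 0; split; [exact: (A_nat r 0)| by rewrite subrr mulr0]. Qed.

Lemma cm_sym x y : cm x y -> cm y x.
Proof.
move=> [z [hz e]]; exists (- z); split; first exact: A_opp.
by rewrite mulrN -e opprB.
Qed.

Lemma cm_trans {x y w} : cm x y -> cm y w -> cm x w.
Proof.
move=> [z1 [h1 e1]] [z2 [h2 e2]]; exists (z1 + z2); split; first by apply: (@A_add r hr).
by rewrite mulrDr -e1 -e2 addrA subrK.
Qed.

Lemma cm_eq x y : x = y -> cm x y.
Proof. move=> ->; exact: cm_refl. Qed.

Lemma cm_add x1 y1 x2 y2 : cm x1 y1 -> cm x2 y2 -> cm (x1 + x2) (y1 + y2).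
Proof.
move=> [z1 [h1 e1]] [z2 [h2 e2]]; exists (z1 + z2); split; first by apply: (@A_add r hr).
rewrite mulrDr -e1 -e2; ring.
Qed.

Lemma cm_opp x y : cm x y -> cm (- x) (- y).
Proof.
move=> [z [hz e]]; exists (- z); split; first exact: A_opp.
rewrite mulrN -e; ring.
Qed.

Lemma cm_mul x1 y1 x2 y2 : A x2 -> A y1 -> cm x1 y1 -> cm x2 y2 ->
  cm (x1 * x2) (y1 * y2).
Proof.
move=> a2 b1 [z1 [h1 e1]] [z2 [h2 e2]]; exists (z1 * x2 + y1 * z2); split.
  by apply: (@A_add r hr); apply: A_mul.
have -> : x1 * x2 - y1 * y2 = (x1 - y1) * x2 + y1 * (x2 - y2) by ring.
rewrite e1 e2; ring.
Qed.

Lemma cm_exp x y n : A x -> A y -> cm x y -> cm (x ^+ n) (y ^+ n).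
Proof.
move=> ax ay h; elim: n => [|n IH]; first by rewrite !expr0; exact: cm_refl.
rewrite !exprS; apply: cm_mul => //; exact: A_exp.
Qed.

Lemma frob_p x y : A x -> A y -> cm ((x + y) ^+ p) (x ^+ p + y ^+ p).
Proof.
move=> ax ay.
pose F (i : 'I_p.+1) := x ^+ (p - i) * y ^+ i.
exists (\sum_i F i *+ ('C(p, i) %/ p)); split.
  apply: (@A_sum r hr) => i; apply: A_muln; apply: A_mul; exact: A_exp.
rewrite exprDn mulr_sumr.
have -> : \sum_(i < p.+1) x ^+ (p - i) * y ^+ i *+ 'C(p, i) =
   \sum_(i < p.+1) (p%:R * (F i *+ ('C(p, i) %/ p)) + F i *+ ('C(p, i) %% p)).
  apply: eq_bigr => i _.
  by rewrite {1}(divn_eq 'C(p, i) p) mulrnDr mulrnA mulr_natl.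
rewrite big_split /=.
have -> : \sum_(i < p.+1) F i *+ ('C(p, i) %% p) = x ^+ p + y ^+ p.
  rewrite /F -(big_mkord xpredT (fun i => x ^+ (p - i) * y ^+ i *+ ('C(p, i) %% p))).
  have p1 : (1 < p)%N by exact: prime_gt1.
  rewrite big_ltn // big_nat_recr /=; last exact: ltnW.
  rewrite big_nat big1; last first.
    move=> i /andP[h1 h2]; rewrite (eqP (prime_dvd_bin hp _)) ?mulr0n //.
    by rewrite h1 h2.
  rewrite bin0 binn modn_small // subn0 subnn !expr0 mulr1 mul1r add0r.
  by rewrite !mulr1n.
by rewrite addrK.
Qed.

Lemma frob_q s x y : A x -> A y ->
  cm ((x + y) ^+ (p ^ s)) (x ^+ (p ^ s) + y ^+ (p ^ s)).
Proof.
move=> ax ay; elim: s => [|s IH]; first by rewrite expn0 !expr1; exact: cm_refl.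
rewrite expnSr !exprM.
have ax' : A (x ^+ (p ^ s)) by apply: A_exp.
have ay' : A (y ^+ (p ^ s)) by apply: A_exp.
have axy : A ((x + y) ^+ (p ^ s)) by apply: A_exp; apply: (@A_add r hr).
apply: (cm_trans _ (frob_p _ _ ax' ay')).
apply: cm_exp => //; exact: (@A_add r hr).
Qed.

Lemma frob_nat s n : cm ((n%:R : algC) ^+ (p ^ s)) n%:R.
Proof.
elim: n => [|n IH].
  rewrite expr0n expn_eq0 (negbTE (lt0n_neq0 (prime_gt0 hp))) ?andbF ?andFb; exact: cm_refl.
rewrite -addn1 natrD.
apply: (cm_trans (frob_q _ _ _ (A_nat r n) (A_nat r 1))).
apply: cm_add => //; rewrite expr1n; exact: cm_refl.
Qed.

End C.
Arguments cm_trans {r p} hr {x y w}.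

Section D.
Variables r p s : nat.
Hypothesis hr : (0 < r)%N.
Hypothesis hp : prime p.
Hypothesis hodd : odd p.
Local Notation A := (inZlam r).
Local Notation cm := (congr_mod r p).
Local Notation q := (p ^ s)%N.
Local Notation l := (lam r).
Hypothesis hmu : l ^+ q = l \/ l ^+ q = l^-1.

Lemma q_odd : odd q.
Proof. by rewrite oddX hodd orbT. Qed.

Lemma neg_odd (b : algC) : (- b) ^+ q = - b ^+ q.
Proof. by rewrite exprNn -signr_odd q_odd expr1 mulN1r. Qed.

Lemma frob_sub a b : A a -> A b -> cm ((a - b) ^+ q) (a ^+ q - b ^+ q).
Proof.
move=> ha hb; rewrite -neg_odd; apply: frob_q => //; exact: A_opp.
Qed.

Lemma A_D1 : A (- l - l^-1).
Proof. apply: (@A_add r hr); apply: A_opp; [exact: A_lam | exact: (@A_lamV r hr)]. Qed.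

Lemma D1_fix : cm ((- l - l^-1) ^+ q) (- l - l^-1).
Proof.
apply: (cm_trans hr (frob_sub _ _ (A_opp _ _ (A_lam r)) (@A_lamV r hr))).
apply: cm_eq; rewrite neg_odd exprVn.
case: hmu => ->; first by [].
by rewrite invrK addrC.
Qed.

Lemma Delta_all i : [/\ A (Delta r i), A (Delta r i.+1),
  cm (Delta r i ^+ q) (Delta r i) & cm (Delta r i.+1 ^+ q) (Delta r i.+1)].
Proof.
elim: i => [|i [a0 a1 c0 c1]].
  split; [exact: (A_nat r 1) | exact: A_D1 | rewrite expr1n; exact: cm_refl | exact: D1_fix].
have E : Delta r i.+2 = (- l - l^-1) * Delta r i.+1 - Delta r i by [].
have a2 : A (Delta r i.+2).
  rewrite E; apply: (@A_add r hr); last exact: A_opp.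
  apply: A_mul => //; exact: A_D1.
split => //.
rewrite E; apply: (cm_trans hr (frob_sub _ _ _ _)); first by apply: A_mul => //; exact: A_D1.
  by [].
rewrite exprMn; apply: (@cm_add r p hr); last exact: cm_opp.
apply: (@cm_mul r p hr) => //; [exact: A_exp | exact: A_D1 | exact: D1_fix].
Qed.

Local Notation N := ((2 * r)%:R : algC).

Lemma u_fix : cm (N^-1 ^+ q) N^-1.
Proof.
have [z [hz e]] := @frob_nat r p hr hp s (2 * r).
exists (- (N^-1 ^+ q.+1 * z)); split.
  apply: A_opp; apply: A_mul => //; apply: A_exp; exact: A_invN.
have hN := @N_neq0 r hr.
have key : N^-1 ^+ q.+1 * (N ^+ q - N) = N^-1 - N^-1 ^+ q.
  rewrite mulrBr; congr (_ - _).
    by rewrite exprS -mulrA -exprMn mulVf // expr1n mulr1.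
  by rewrite exprSr -mulrA mulVf // mulr1.
by rewrite mulrN mulrCA -e key opprB.
Qed.

Lemma eta_fix : cm (eta2 r ^+ q) (eta2 r).
Proof.
rewrite /eta2 exprMn neg_odd -exprAC.
have aw : A (l - l^-1).
  apply: (@A_add r hr); [exact: A_lam | apply: A_opp; exact: (@A_lamV r hr)].
apply: (@cm_mul r p hr).
- apply: A_exp; exact: A_invN.
- apply: A_opp; exact: A_exp.
- apply: cm_opp.
  apply: (cm_trans hr (@cm_exp r p hr _ _ 2 _ _ (frob_sub _ _ (A_lam r) (@A_lamV r hr)))).
  + by apply: A_exp.
  + apply: (@A_add r hr); first (apply: A_exp; exact: A_lam).
    apply: A_opp; apply: A_exp; exact: (@A_lamV r hr).
  + apply: cm_eq; rewrite exprVn.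
    case: hmu => ->; first by [].
    by rewrite invrK -opprB sqrrN.
- exact: u_fix.
Qed.

End D.

Theorem lemma3 (p s r : nat) :
  prime p -> odd p -> (1 <= s)%N -> (3 <= r)%N ->
  ((r %| (p ^ s + 1) %/ 2) || (r %| (p ^ s - 1) %/ 2))%N ->
  (forall i : nat, congr_mod r p (Delta r i) (Delta r i ^+ (p ^ s))) /\
  congr_mod r p (eta2 r) (eta2 r ^+ (p ^ s)).
Proof.
move=> hp hodd hs hr3 hdiv.
have hr : (0 < r)%N by apply: leq_trans hr3.
have qo : odd (p ^ s) by rewrite oddX hodd orbT.
have q2 : ((p ^ s) %% 2 = 1)%N by rewrite modn2 qo.
have l2r : lam r ^+ (r * 2) = 1 by rewrite exprM (@lamr r hr) sqrrN expr1n.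
have hmu : lam r ^+ (p ^ s) = lam r \/ lam r ^+ (p ^ s) = (lam r)^-1.
  case/orP: hdiv => /dvdnP [k hk].
    right; apply: (mulIf (@lam_neq0 r hr)); rewrite mulVf ?lam_neq0 // -exprSr.
    have -> : (p ^ s).+1 = (r * 2 * k)%N by lia.
    by rewrite exprM l2r expr1n.
  left.
  have -> : (p ^ s = r * 2 * k + 1)%N.
    have : (0 < p ^ s)%N by rewrite expn_gt0 prime_gt0.
    lia.
  by rewrite exprD exprM l2r expr1n mul1r expr1.
split.
  move=> i; have [_ _ c _] := @Delta_all r p s hr hp hodd hmu i; exact: cm_sym.
apply: cm_sym; exact: (@eta_fix r p s hr hp hodd hmu).
Qed.
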